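(* Let $A$ be a commutative quasi-ring and $I$ an ideal of $A$. The congruence class of $0$ modulo $I$ is equal to the heart $C(I)$ of $I$, and it is a closed ideal of $A$. In particular, if $I$ is closed, the class of $0$ modulo $I$ is $I$ itself.
   Context: A quasi-ring is a semiring (with $(A,+)$ a commutative monoid with neutral $0$, $(A,\cdot)$ a monoid with unit $1$, distributivity, $0$ absorbing) whose unit $1$ is quasi-invertible for addition (there is $y$ with $1+y+1=1$, $y+1+y=y$). An ideal is a subset containing $0$ stable under addition and under multiplication by elements of $A$. Congruence modulo $I$: $a\equiv b \pmod I$ iff $(a+I)\cap(b+I)\neq\emptyset$ and for all $c\in I$, $r\in A$: $ac+r\in I\iff bc+r\in I$. The closure of $I$ is $\overline I=\{x\in A : (x+I)\cap I\neq\emptyset\}$; $I$ is closed if $\overline I=I$ (equivalently: $(a+I)\cap I\neq\emptyset\Rightarrow a\in I$). The heart of $I$ is $C(I)=\{x\in\overline I : \forall \alpha\in I,\ \forall r\in A,\ x\alpha+r\in I\Rightarrow r\in I\}$. *)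

(* Defs.v *)
(* A (commutative) semiring in the paper's sense is a
   MathComp comPzSemiRingType: commutative additive monoid, multiplicative
   monoid, distributivity, 0 absorbing, commutative multiplication. *)
From HB Require Import structures.
From mathcomp Require Import all_boot all_order all_algebra.
Set Implicit Arguments. Unset Strict Implicit. Unset Printing Implicit Defensive.
Import GRing.Theory.
Local Open Scope ring_scope.

(* the unit 1 is quasi-invertible for addition *)
Definition quasi_ring_unit (A : comPzSemiRingType) : Prop :=
  exists y : A, 1 + y + 1 = 1 /\ y + 1 + y = y.

Definition is_ideal (A : comPzSemiRingType) (I : A -> Prop) : Prop :=
  I 0 /\ (forall x y, I x -> I y -> I (x + y)) /\
  (forall a x, I x -> I (a * x)).

Definition congr_mod (A : comPzSemiRingType) (I : A -> Prop) (a b : A) : Prop :=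
  (exists c d, I c /\ I d /\ a + c = b + d) /\
  (forall c r, I c -> (I (a * c + r) <-> I (b * c + r))).

Definition closure (A : comPzSemiRingType) (I : A -> Prop) (x : A) : Prop :=
  exists c d, I c /\ I d /\ x + c = d.

Definition is_closed (A : comPzSemiRingType) (I : A -> Prop) : Prop :=
  forall x, closure I x <-> I x.

Definition heart (A : comPzSemiRingType) (I : A -> Prop) (x : A) : Prop :=
  closure I x /\ (forall alpha r, I alpha -> I (x * alpha + r) -> I r).

Definition class0 (A : comPzSemiRingType) (I : A -> Prop) (x : A) : Prop :=
  congr_mod I x 0.

(* Main.v *)
Require Import Defs.
From HB Require Import structures.
From mathcomp Require Import all_boot all_order all_algebra.
Import GRing.Theory.
Local Open Scope ring_scope.

Theorem proposition2p3 (A : comPzSemiRingType) (hA : quasi_ring_unit A)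
  (I : A -> Prop) (hI : is_ideal I) :
  (forall x, class0 I x <-> heart I x) /\
  is_ideal (class0 I) /\ is_closed (class0 I) /\
  (is_closed I -> forall x, class0 I x <-> I x).
Proof.
have [I0 [ID IM]] := hI.
have XA : forall x a, I a -> I (x * a) by move=> x a Ha; exact: IM.
have E1 : forall x, class0 I x <-> heart I x.
  move=> x; split.
  - case=> [[c [d [Hc [Hd E]]]] H]; split.
      by exists c, d; rewrite E add0r.
    move=> a r Ha Hr; by have := (proj1 (H a r Ha) Hr); rewrite mul0r add0r.
  - case=> [[c [d [Hc [Hd E]]]] H]; split.
      by exists c, d; rewrite E add0r.
    move=> a r Ha; rewrite mul0r add0r; split; first exact: H.
    by move=> Hr; apply: ID => //; exact: XA.
have Hcl : forall x, class0 I x -> Defs.closure I x.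
  by move=> x [[c [d [Hc [Hd E]]]] _]; exists c, d; rewrite E add0r.
have Hh : forall x, class0 I x -> forall a r, I a -> I (x * a + r) -> I r.
  by move=> x Hx; case: (proj1 (E1 x) Hx).
have Mk : forall x, Defs.closure I x -> (forall a r, I a -> I (x * a + r) -> I r) -> class0 I x.
  by move=> x Hx H; apply/E1; split.
have Hid : is_ideal (class0 I).
  split; first by apply: Mk; [exists 0, 0; rewrite addr0 | move=> a r _; rewrite mul0r add0r].
  split.
    move=> x y Hx Hy; apply: Mk.
      have [c1 [d1 [Hc1 [Hd1 E1']]]] := Hcl _ Hx.
      have [c2 [d2 [Hc2 [Hd2 E2']]]] := Hcl _ Hy.
      exists (c1 + c2), (d1 + d2); split; first exact: ID.
      split; first exact: ID.
      by rewrite -E1' -E2' addrACA.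
    move=> a r Ha; rewrite mulrDl -addrA => H.
    exact: (Hh _ Hy a r Ha (Hh _ Hx a _ Ha H)).
  move=> b x Hx; apply: Mk.
    have [c [d [Hc [Hd E]]]] := Hcl _ Hx.
    by exists (b * c), (b * d); split; [exact: XA|split; [exact: XA|rewrite -E mulrDr]].
  move=> a r Ha; rewrite -mulrA mulrCA => H; exact: (Hh _ Hx (b * a) r (XA _ _ Ha) H).
split; first exact: E1.
split; first exact: Hid.
split.
  move=> x; split.
    case=> [c [d [Hc [Hd E]]]]; apply: Mk.
      have [c1 [d1 [Hc1 [Hd1 F1]]]] := Hcl _ Hc.
      have [c2 [d2 [Hc2 [Hd2 F2]]]] := Hcl _ Hd.
      exists (d1 + c2), (d2 + c1); split; first exact: ID.
      split; first exact: ID.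
      by rewrite -F1 -F2 -E !addrA [_ + c2 + c1]addrAC.
    move=> a r Ha H; apply: (Hh _ Hd a r Ha).
    rewrite -E mulrDl [x * a + _]addrC -addrA.
    apply: ID; first exact: XA.
    exact: H.
  by move=> Hx; exists 0, x; split; [exact: (proj1 Hid)|split; [exact: Hx|rewrite addr0]].
move=> Hc x; split.
  by move=> /Hcl /Hc.
move=> Hx; apply: Mk; first by exists 0, x; rewrite addr0.
move=> a r Ha H; apply/Hc; exists (x * a), (x * a + r).
by split; [exact: XA|split; [exact: H|rewrite addrC]].
Qed.
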